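(* Let $n\ge 1$, let $C_u(v_1),\ldots,C_u(v_n)>0$ and $R_1,\ldots,R_n>0$ be sustainable, i.e. $R_i\le C_u(v_i)$ for all $i$, $\sum_{j\ne i}R_j\le C_d(v_i)$ for all $i$ (for some downlink capacities $C_d(v_i)>0$), and $(n-1)\sum_{i=1}^n R_i\le\sum_{i=1}^n C_u(v_i)$. Then the output $r_{i,j}$ of the algorithm described in the context satisfies the Valid Partition Constraint: $\sum_{j=1}^n r_{i,j} = R_i$ for every $1\le i\le n$.
   Context: Sub-stream rate assigning algorithm. Input: $n$, uplink capacities $C_u(v_1),\ldots,C_u(v_n)$ and rates $R_1,\ldots,R_n$. Initialize $r_{i,j}:=0$ for all $1\le i,j\le n$ and $U_i := C_u(v_i)-R_i$ for $1\le i\le n$. Outer loop: for $i=1$ to $n$: set $R'_i := R_i$; inner loop: for $j=1$ to $n$: if $(n-2)R'_i > U_j$ then set $r_{i,j} := U_j/(n-2)$, else set $r_{i,j} := R'_i$; then set $U_j := U_j-(n-2)r_{i,j}$ and $R'_i := R'_i - r_{i,j}$; if $R'_i = 0$, exit the inner loop. Output all $r_{i,j}$. *)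

(* Defs.v *)
From mathcomp Require Import all_boot all_order all_algebra.
Set Implicit Arguments. Unset Strict Implicit. Unset Printing Implicit Defensive.
Import Order.TTheory GRing.Theory Num.Theory.
Local Open Scope ring_scope.

(* Peers are indexed 0..n-1 (the paper's
   v_1..v_n).  Rates and capacities are functions nat -> R; only indices < n
   are used.  r i j is the rate of peer i's sub-stream relayed by peer j. *)
Section Algo.
Variable R : realFieldType.

(* The inner loop for a fixed i: iterate j over js with current remaining
   rate Rp and current residual capacities U.  Returns (row r_{i,.}, new U).
   Entries not assigned stay 0 (their initial value). *)
Fixpoint sub_inner (n : nat) (js : seq nat) (Rp : R) (U : nat -> R)
  : (nat -> R) * (nat -> R) :=
  match js with
  | [::] => (fun _ => 0, U)
  | j :: js' =>
      let r := if U j < (n%:R - 2) * Rp then U j / (n%:R - 2) else Rp in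
      let U' := fun k => if k == j then U j - (n%:R - 2) * r else U k in
      let Rp' := Rp - r in
      let res := if Rp' == 0 then (fun _ => 0, U') else sub_inner n js' Rp' U' in
      (fun k => if k == j then r else res.1 k, res.2)
  end.

Fixpoint sub_outer (n : nat) (Rs : nat -> R) (ids : seq nat) (U : nat -> R)
  : (nat -> nat -> R) * (nat -> R) :=
  match ids with
  | [::] => (fun _ _ => 0, U)
  | i :: ids' =>
      let p := sub_inner n (iota 0 n) (Rs i) U in
      let res := sub_outer n Rs ids' p.2 in
      (fun k => if k == i then p.1 else res.1 k, res.2)
  end.

Definition substream_rates (n : nat) (Cu Rs : nat -> R) : nat -> nat -> R :=
  (sub_outer n Rs (iota 0 n) (fun j => Cu j - Rs j)).1.

End Algo.

(* Main.v *)
Require Import Defs.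
From mathcomp Require Import all_boot all_order all_algebra lra.
Import Order.TTheory GRing.Theory Num.Theory.
Local Open Scope ring_scope.
Lemma inner (R : realFieldType) n (js : seq nat) (Rp : R) (U : nat -> R) :
  uniq js -> 0 <= Rp -> (forall k, k \in js -> 0 <= U k) ->
  [/\ forall k, k \notin js -> (sub_inner n js Rp U).1 k = 0 /\ (sub_inner n js Rp U).2 k = U k,
      \sum_(k <- js) (sub_inner n js Rp U).2 k = \sum_(k <- js) U k - (n%:R - 2) * \sum_(k <- js) (sub_inner n js Rp U).1 k,
      \sum_(k <- js) (sub_inner n js Rp U).1 k <= Rp,
      forall k, k \in js -> 0 <= (sub_inner n js Rp U).2 k &
      [\/ js = [::], \sum_(k <- js) (sub_inner n js Rp U).1 k = Rp | 0 < (n%:R - 2 : R) /\ forall k, k \in js -> (sub_inner n js Rp U).2 k = 0]].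
Proof.
set c : R := n%:R - 2.
elim: js Rp U => [|j js IH] Rp U /=.
  move=> _ Rp0 _; rewrite !big_nil mulr0 subr0; split => //; by constructor 1.
move=> /andP[jnin ujs] Rp0 U0.
have Uj0 : 0 <= U j by apply: U0; rewrite inE eqxx.
set r := (if U j < c * Rp then U j / c else Rp).
have [r0 [rle Ujr]] : 0 <= r /\ r <= Rp /\ 0 <= U j - c * r.
  rewrite /r; case: ifP => h.
    have cpos : 0 < c by case: (ltrP 0 c) => // cle; nra.
    split; first by rewrite divr_ge0 // ltW.
    split; first by rewrite ltW // ltr_pdivrMr // mulrC.
    by rewrite [c * _]mulrC divfK ?subrr // gt_eqF.
  move/negbT: h; rewrite -leNgt => h; split => //; split => //; lra.
have key : r != Rp -> 0 < c /\ U j - c * r = 0.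
  rewrite /r; case: ifP => h; last by rewrite eqxx.
  have cpos : 0 < c by case: (ltrP 0 c) => // cle; nra.
  by rewrite [c * _]mulrC divfK ?subrr // gt_eqF.
set U' := (fun k0 : nat => if k0 == j then U j - (n%:R - 2) * r else U k0).
have nj : forall k, k \in js -> (k == j) = false.
  by move=> k kin; apply/eqP => kj; move: jnin; rewrite -kj kin.
have sumU' : \sum_(k <- js) U' k = \sum_(k <- js) U k.
  by apply: eq_big_seq => k kin; rewrite /U' nj.
have U'j : U' j = U j - c * r by rewrite /U' eqxx.
have U'0 : forall k, k \in js -> 0 <= U' k.
  by move=> k kin; rewrite /U' nj //; apply: U0; rewrite inE kin orbT.
have sumif : forall F : nat -> R, \sum_(k <- j :: js) (if k == j then r else F k) = r + \sum_(k <- js) F k.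
  move=> F; rewrite big_cons eqxx; congr (_ + _).
  by apply: eq_big_seq => k kin; rewrite nj.
rewrite sumif.
case: ifP => HR /=.
  have rR : r = Rp by lra.
  have z : \sum_(k <- js) (0:R) = 0 by rewrite big1.
  rewrite z.
  split.
  - by move=> k; rewrite inE negb_or => /andP[kj kn]; rewrite /U' (negbTE kj).
  - by rewrite !big_cons sumU' U'j; lra.
  - lra.
  - move=> k; rewrite inE => /orP[/eqP -> | kin]; first by rewrite U'j.
    exact: U'0.
  - by constructor 2; lra.
have rR : r != Rp by apply/eqP => e; move: HR; rewrite e subrr eqxx.
have [cpos Ujz] := key rR.
have Rp'0 : 0 <= Rp - r by lra.
have [IHa IHb IHc IHd IHe] := IH (Rp - r) U' ujs Rp'0 U'0.
set p := sub_inner n js (Rp - r) U'.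
have pj : p.2 j = U' j by have [] := IHa j jnin.
split.
- move=> k; rewrite inE negb_or => /andP[kj kn]; rewrite (negbTE kj).
  have [-> ->] := IHa k kn; by rewrite /U' (negbTE kj).
- by rewrite !big_cons IHb sumU' pj U'j; rewrite -/c; lra.
- rewrite -/c; lra.
- move=> k; rewrite inE => /orP[/eqP -> | kin]; first by rewrite pj U'j.
  exact: IHd.
- case: IHe => [js0 | sumeq | [_ zer]].
  + constructor 3; split => // k; rewrite js0 inE => /eqP ->; by rewrite pj U'j.
  + by constructor 2; rewrite -/c sumeq; lra.
  + constructor 3; split => // k; rewrite inE => /orP[/eqP -> | kin]; first by rewrite pj U'j.
    exact: zer.
Qed.

Lemma outer (R : realFieldType) n (Rs : nat -> R) (ids : seq nat) (U : nat -> R) :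
  (1 <= n)%N -> uniq ids -> (forall i, i \in ids -> 0 <= Rs i) ->
  (forall k, k \in iota 0 n -> 0 <= U k) ->
  (n%:R - 2) * \sum_(i <- ids) Rs i <= \sum_(k <- iota 0 n) U k ->
  forall i, i \in ids -> \sum_(k <- iota 0 n) (sub_outer n Rs ids U).1 i k = Rs i.
Proof.
move=> n1; elim: ids U => [|i ids IH] U //= /andP[inin uids] Rs0 U0 Hsum k.
have [a b c d e] := @inner R n _ _ U (iota_uniq 0 n) (Rs0 i (mem_head _ _)) U0.
set p := sub_inner n (iota 0 n) (Rs i) U.
have Sge0 : 0 <= \sum_(i <- ids) Rs i.
  rewrite big_seq; apply: sumr_ge0 => l lin; apply: Rs0; by rewrite inE lin orbT.
rewrite big_cons in Hsum.
have sumeq : \sum_(k <- iota 0 n) p.1 k = Rs i.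
  case: e => [e | // | [cpos zer]].
    by move: (size_iota 0 n); rewrite e /= => n0; move: n1; rewrite -n0.
  rewrite big1_seq in b; last by move=> l /andP[_ lin]; apply: zer.
  apply/le_anti; rewrite c /=.
  have : (n%:R - 2) * Rs i <= (n%:R - 2) * \sum_(k <- iota 0 n) p.1 k.
    rewrite mulrDr in Hsum.
    have : 0 <= (n%:R - 2) * \sum_(i <- ids) Rs i by rewrite mulr_ge0 // ltW.
    lra.
  by rewrite ler_pM2l.
rewrite inE => /orP[/eqP -> | kin]; first by rewrite eqxx.
have ki : (k == i) = false by apply/eqP => ki; move: inin; rewrite -ki kin.
rewrite ki; apply: IH => //.
- by move=> l lin; apply: Rs0; rewrite inE lin orbT.
- rewrite b sumeq; rewrite mulrDr in Hsum; lra.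
Qed.

Theorem propositionB3 (R : realFieldType) (n : nat) (Cu Cd Rs : nat -> R) :
  (1 <= n)%N ->
  (forall i, (i < n)%N -> 0 < Cu i) ->
  (forall i, (i < n)%N -> 0 < Cd i) ->
  (forall i, (i < n)%N -> 0 < Rs i) ->
  (forall i, (i < n)%N -> Rs i <= Cu i) ->
  (forall i, (i < n)%N -> \sum_(j < n | (j : nat) != i) Rs j <= Cd i) ->
  (n%:R - 1) * (\sum_(i < n) Rs i) <= \sum_(i < n) Cu i ->
  forall i, (i < n)%N -> \sum_(j < n) substream_rates n Cu Rs i j = Rs i.
Proof.
move=> n1 _ _ Rpos RC _ Hsum i iltn.
rewrite -(big_mkord (fun _ => true)) /substream_rates.
rewrite /index_iota subn0.
apply: outer => //.
- exact: iota_uniq.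
- by move=> l; rewrite mem_iota add0n => /andP[_ l_n]; apply: ltW; apply: Rpos.
- by move=> l; rewrite mem_iota add0n => /andP[_ l_n]; rewrite subr_ge0; apply: RC.
- rewrite big_split /= sumrN.
  rewrite -(big_mkord (fun _ => true) Rs) -(big_mkord (fun _ => true) Cu) /index_iota subn0 in Hsum.
  lra.
- by rewrite mem_iota add0n.
Qed.
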